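(* A ring $R$ with identity is semisimple if and only if the free right $R$-module $R_R^{(\mathbb{N})}$ has the SSP.
   Context: Rings are associative with identity and modules are unitary. $R_R^{(\mathbb{N})}$ denotes the direct sum of countably many copies of $R_R$. A module $M$ has the summand sum property (SSP) if the sum of any two direct summands of $M$ is again a direct summand of $M$. *)

(* Defs.v *)
(* Right modules over a (possibly noncommutative) ring R,
   presented concretely: a module is a subset M of a carrier T equipped with
   zero, addition and a right R-action; submodules are subsets of M. *)
From HB Require Import structures.
From mathcomp Require Import all_boot all_order all_algebra.
Set Implicit Arguments. Unset Strict Implicit. Unset Printing Implicit Defensive.
Import GRing.Theory.
Local Open Scope ring_scope.

Section ModuleNotions.
Variables (R : pzRingType) (T : Type) (z : T) (add : T -> T -> T)
          (act : T -> R -> T).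

Definition is_submod (M N : T -> Prop) : Prop :=
  (forall x, N x -> M x) /\ N z /\
  (forall x y, N x -> N y -> N (add x y)) /\
  (forall x r, N x -> N (act x r)).

Definition sum_sub (A B : T -> Prop) : T -> Prop :=
  fun x => exists a b, A a /\ B b /\ x = add a b.

Definition direct_summand (M A : T -> Prop) : Prop :=
  is_submod M A /\
  exists B, is_submod M B /\ (forall x, A x -> B x -> x = z) /\
            (forall x, M x -> sum_sub A B x).

Definition SSP (M : T -> Prop) : Prop :=
  forall A B, direct_summand M A -> direct_summand M B ->
              direct_summand M (sum_sub A B).
End ModuleNotions.

(* The free right R-module R_R^(N): finitely supported sequences nat -> R *)
Definition free_carrier (R : pzRingType) : (nat -> R) -> Prop :=
  fun f => exists N, forall n, (N <= n)%N -> f n = 0.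
Definition free_zero (R : pzRingType) : nat -> R := fun _ => 0.
Definition free_add (R : pzRingType) (f g : nat -> R) : nat -> R :=
  fun n => f n + g n.
Definition free_act (R : pzRingType) (f : nat -> R) (r : R) : nat -> R :=
  fun n => f n * r.

Definition free_SSP (R : pzRingType) : Prop :=
  SSP (@free_zero R) (@free_add R) (@free_act R) (@free_carrier R).

Definition semisimple_ring (R : pzRingType) : Prop :=
  forall I : R -> Prop,
    is_submod 0 +%R *%R (fun _ => True) I ->
    direct_summand 0 +%R *%R (fun _ => True) I.

(* Main.v *)
Require Import Defs.
From mathcomp Require Import all_boot all_order all_algebra.
From Stdlib Require Import FunctionalExtensionality ClassicalEpsilon Classical.
Set Implicit Arguments. Unset Strict Implicit. Unset Printing Implicit Defensive.
Import GRing.Theory.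
Local Open Scope ring_scope.

Section Aux.
Variable R : pzRingType.
Notation F := (@free_carrier R).
Notation fz := (@free_zero R).
Notation fadd := (@free_add R).
Notation fact := (@free_act R).

Lemma Fz : F fz.
Proof. by exists 0%N. Qed.

Lemma Fadd f g : F f -> F g -> F (fadd f g).
Proof.
move=> [N1 H1] [N2 H2]; exists (maxn N1 N2) => n Hn.
rewrite /free_add H1 ?H2 ?addr0 //.
  by apply: leq_trans Hn; rewrite leq_maxr.
by apply: leq_trans Hn; rewrite leq_maxl.
Qed.

Lemma Fact f r : F f -> F (fact f r).
Proof. by move=> [N H]; exists N => n Hn; rewrite /free_act H ?mul0r. Qed.

Lemma Fbound N (f : nat -> R) : (forall m, (N <= m)%N -> f m = 0) -> F f.
Proof. by move=> H; exists N. Qed.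

Lemma sum_submod (A B : (nat -> R) -> Prop) :
  is_submod fz fadd fact F A -> is_submod fz fadd fact F B ->
  is_submod fz fadd fact F (sum_sub fadd A B).
Proof.
move=> [A1 [A2 [A3 A4]]] [B1 [B2 [B3 B4]]]; split; [|split; [|split]].
- by move=> x [a [b [Ha [Hb ->]]]]; apply: Fadd; auto.
- exists fz, fz; split; [exact: A2|split; [exact: B2|]].
  by apply: functional_extensionality => n; rewrite /free_add /free_zero addr0.
- move=> x y [a [b [Ha [Hb ->]]]] [a' [b' [Ha' [Hb' ->]]]].
  exists (fadd a a'), (fadd b b'); split; [auto|split; [auto|]].
  by apply: functional_extensionality => n; rewrite /free_add addrACA.
- move=> x r [a [b [Ha [Hb ->]]]].
  exists (fact a r), (fact b r); split; [auto|split; [auto|]].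
  by apply: functional_extensionality => n; rewrite /free_add /free_act mulrDl.
Qed.

Lemma fwd : semisimple_ring R -> forall K,
  is_submod fz fadd fact F K -> direct_summand fz fadd fact F K.
Proof.
move=> hss K HK; split => //.
case: HK => [K1 [K2 [K3 K4]]].
pose Idl n := fun t : R => exists k, K k /\ (forall m, (n < m)%N -> k m = 0) /\ t = k n.
have HI : forall n, is_submod 0 +%R *%R (fun _ => True) (Idl n).
  move=> n; split; [by []|split; [|split]].
  - by exists fz; do 2!split => //.
  - move=> x y [k [Hk [Hk' ->]]] [k2 [Hk2 [Hk2' ->]]].
    exists (fadd k k2); split; first exact: K3.
    by split => // m Hm; rewrite /free_add Hk' ?Hk2' ?addr0.
  - move=> x r [k [Hk [Hk' ->]]].
    exists (fact k r); split; first exact: K4.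
    by split => // m Hm; rewrite /free_act Hk' ?mul0r.
pose J n := proj1_sig (constructive_indefinite_description _ (proj2 (hss _ (HI n)))).
have HJ : forall n, is_submod 0 +%R *%R (fun _ => True) (J n) /\
   (forall x, Idl n x -> J n x -> x = 0) /\
   (forall x, True -> sum_sub +%R (Idl n) (J n) x).
  by move=> n; rewrite /J; case: constructive_indefinite_description.
pose C := fun x => F x /\ forall n, J n (x n).
exists C; split; [split; [|split; [|split]]|split].
- by move=> x [].
- split; first exact: Fz.
  by move=> n; case: (HJ n) => [[_ [H0 _]] _].
- move=> x y [Fx Jx] [Fy Jy]; split; first exact: Fadd.
  by move=> n; case: (HJ n) => [[_ [_ [H0 _]]] _]; apply: H0.
- move=> x r [Fx Jx]; split; first exact: Fact.
  by move=> n; case: (HJ n) => [[_ [_ [_ H0]]] _]; apply: H0.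
- move=> x Kx [[N HN] Jx].
  suff H : forall N0 x, K x -> (forall n, J n (x n)) ->
             (forall m, (N0 <= m)%N -> x m = 0) -> forall m, x m = 0.
    by apply: functional_extensionality => m; apply: (H N).
  clear N HN; elim=> [|N IH] y Ky Jy Hy; first by move=> m; apply: Hy.
  apply: IH => // m Hm.
  case: (ltngtP N m) => [Hlt|Hlt|<-]; [by apply: Hy|by rewrite ltnNge Hm in Hlt|].
  case: (HJ N) => [_ [Hd _]]; apply: Hd => //.
  by exists y; split => //; split => // m' Hm'; apply: Hy.
- move=> x [N HN].
  elim: N x HN => [|N IH] x Hx.
    exists fz, fz; split => //; split; first by split; [exact: Fz|move=> n; case: (HJ n) => [[_ [H0 _]] _]].
    by apply: functional_extensionality => n; rewrite /free_add /free_zero Hx // addr0.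
  case: (HJ N) => [[_ [J0 [JD JM]]] [_ Hs]].
  case: (Hs 1 I) => [e [f [[k [Kk [Hk ->]]] [Jf Hef]]]].
  pose d := fun m => if m == N then f * x N else 0.
  pose y := fun m => x m - k m * x N - d m.
  have [a [b [Ka [[Fb Jb] Hy]]]] : sum_sub fadd K C y.
    apply: IH => m Hm; rewrite /y /d.
    case: (ltngtP N m) => [Hlt|Hlt|<-].
    - by rewrite Hx // Hk // mul0r !subr0.
    - by rewrite ltnNge Hm in Hlt.
    - by rewrite -addrA -opprD -mulrDl -Hef mul1r subrr.
  exists (fadd a (fact k (x N))), (fadd b d); split; first by apply: K3 => //; apply: K4.
  split.
    split; first by apply: Fadd => //; exists N.+1 => m Hm; rewrite /d; case: eqP => // E; move: Hm; rewrite E ltnn.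
    move=> n; case: (HJ n) => [[_ [J0' [JD' JM']]] _]; apply: JD' => //.
    rewrite /d; case: eqP => [->|_] //; exact: JM.
  apply: functional_extensionality => m.
  have := congr1 (fun g => g m) Hy; rewrite /free_add /free_act /y => Em.
  have -> : x m = (x m - k m * x N - d m) + d m + k m * x N by rewrite !subrK.
  by rewrite Em -!addrA; congr (_ + _); rewrite [RHS]addrC -addrA.
Qed.

Definition span (x : nat -> R) : R -> Prop :=
  fun t => exists N (r : nat -> R), t = \sum_(i < N) x i * r i.

Lemma span_widen (x r : nat -> R) N M : (N <= M)%N ->
  \sum_(i < N) x i * r i = \sum_(i < M) x i * (if (i < N)%N then r i else 0).
Proof.
move=> H; rewrite (big_ord_widen _ (fun i => x i * r i) H) big_mkcond.
by apply: eq_bigr => i _; case: ifP => _; rewrite ?mulr0.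
Qed.

Lemma sumext (x f : nat -> R) N M : (forall n, (N <= n)%N -> f n.+1 = 0) ->
  (N <= M)%N -> \sum_(i < M) x i * f i.+1 = \sum_(i < N) x i * f i.+1.
Proof.
move=> Hf H; rewrite (big_ord_widen _ (fun i => x i * f i.+1) H) [RHS]big_mkcond.
by apply: eq_bigr => i _; case: ifP => // h; rewrite Hf ?mulr0 // leqNgt h.
Qed.

Lemma span_submod x : is_submod 0 +%R *%R (fun _ => True) (span x).
Proof.
split; [by []|split; [|split]].
- by exists 0%N, (fun _ => 0); rewrite big_ord0.
- move=> a b [N1 [r1 ->]] [N2 [r2 ->]].
  exists (maxn N1 N2), (fun i => (if (i < N1)%N then r1 i else 0) + (if (i < N2)%N then r2 i else 0)).
  rewrite (span_widen x r1 (leq_maxl N1 N2)) (span_widen x r2 (leq_maxr N1 N2)) -big_split.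
  by apply: eq_bigr => i _; rewrite mulrDr.
- move=> a s [N [r ->]]; exists N, (fun i => r i * s).
  by rewrite mulr_suml; apply: eq_bigr => i _; rewrite mulrA.
Qed.

Lemma span_in x j : span x (x j).
Proof.
exists j.+1, (fun i => if i == j then 1 else 0).
rewrite big_ord_recr /= eqxx mulr1 big1 ?add0r // => i _.
by rewrite (ltn_eqF (ltn_ord i)) mulr0.
Qed.

Lemma span_summand x : free_SSP R ->
  direct_summand 0 +%R *%R (fun _ => True) (span x).
Proof.
move=> hS.
pose A := fun f : nat -> R => F f /\ exists N, (forall n, (N <= n)%N -> f n.+1 = 0) /\
                          f 0%N = \sum_(i < N) x i * f i.+1.
pose B := fun f : nat -> R => F f /\ f 0%N = 0.
pose E := fun f : nat -> R => F f /\ forall n, f n.+1 = 0.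
have HE : is_submod fz fadd fact F E.
  split; [by move=> f []|split; [|split]].
  - by split; [exact: Fz|].
  - move=> f g [Ff Hf] [Fg Hg]; split; first exact: Fadd.
    by move=> n; rewrite /free_add Hf Hg addr0.
  - move=> f r [Ff Hf]; split; first exact: Fact.
    by move=> n; rewrite /free_act Hf mul0r.
have HA : direct_summand fz fadd fact F A.
  split.
    split; [by move=> f []|split; [|split]].
    - split; first exact: Fz.
      by exists 0%N; split => //; rewrite big_ord0.
    - move=> f g [Ff [N1 [H1 E1]]] [Fg [N2 [H2 E2]]]; split; first exact: Fadd.
      exists (maxn N1 N2); split.
        move=> n Hn; rewrite /free_add H1 ?H2 ?addr0 //.
          by apply: leq_trans Hn; rewrite leq_maxr.
        by apply: leq_trans Hn; rewrite leq_maxl.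
      rewrite -(sumext x H1 (leq_maxl N1 N2)) in E1.
      rewrite -(sumext x H2 (leq_maxr N1 N2)) in E2.
      by rewrite /free_add E1 E2 -big_split; apply: eq_bigr => i _; rewrite mulrDr.
    - move=> f r [Ff [N [H1 E1]]]; split; first exact: Fact.
      exists N; split; first by move=> n Hn; rewrite /free_act H1 ?mul0r.
      by rewrite /free_act E1 mulr_suml; apply: eq_bigr => i _; rewrite mulrA.
  exists E; split => //; split.
    move=> f [Ff [N [H1 E1]]] [_ Hf]; apply: functional_extensionality => -[|n] //.
    by rewrite E1 big1 // => i _; rewrite Hf mulr0.
  move=> f [N HN].
  pose s := \sum_(i < N) x i * f i.+1.
  exists (fun n => if n is 0%N then s else f n), (fun n => if n is 0%N then f 0%N - s else 0).
  split.
    split; first by exists N.+1 => -[|n] // Hn; apply: HN; apply: ltnW.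
    by exists N; split => // n Hn; apply: HN; apply: ltnW.
  split; first by split; [exists 1%N => -[|n]|].
  by apply: functional_extensionality => -[|n]; rewrite /free_add /= ?subrKA ?addr0 // addrC subrK.
have HB : direct_summand fz fadd fact F B.
  split.
    split; [by move=> f []|split; [|split]].
    - by split; first exact: Fz.
    - move=> f g [Ff Hf] [Fg Hg]; split; first exact: Fadd.
      by rewrite /free_add Hf Hg addr0.
    - move=> f r [Ff Hf]; split; first exact: Fact.
      by rewrite /free_act Hf mul0r.
  exists E; split => //; split.
    by move=> f [_ H0] [_ Hf]; apply: functional_extensionality => -[|n].
  move=> f [N HN].
  exists (fun n => if n is 0%N then 0 else f n), (fun n => if n is 0%N then f 0%N else 0).
  split.
    by split => //; exists N => -[|n] // Hn; apply: HN.
  split; first by split; [exists 1%N => -[|n]|].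
  by apply: functional_extensionality => -[|n]; rewrite /free_add /= ?add0r ?addr0.
case: (hS A B HA HB) => [[S1 [S2 [S3 S4]]] [D [[D1 [D2 [D3 D4]]] [Ddis Dsum]]]].
pose K := fun t : R => exists d, D d /\ t = d 0%N.
split; first exact: span_submod.
exists K; split; [split; [by []|split; [|split]]|split].
- by exists fz.
- move=> a b [d1 [H1 ->]] [d2 [H2 ->]]; exists (fadd d1 d2); split => //; exact: D3.
- move=> a r [d1 [H1 ->]]; exists (fact d1 r); split => //; exact: D4.
- move=> t [N [r Ht]] [d [Dd Hd]].
  suff : sum_sub fadd A B d by move=> /(Ddis d)/(_ Dd) Hz; rewrite Hd Hz.
  case: (D1 _ Dd) => Nd HNd.
  pose a := fun n => if n is m.+1 then (if (m < N)%N then r m else 0) else d 0%N.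
  exists a, (fun n => d n - a n); split.
    split; first by exists N.+1 => -[|n] //= Hn; rewrite ltnNge -ltnS Hn.
    exists N; split; first by move=> n Hn /=; rewrite ltnNge Hn.
    by rewrite /= -Hd Ht; apply: eq_bigr => i _; rewrite ltn_ord.
  split.
    split; last by rewrite /= subrr.
    exists (maxn Nd N.+1) => -[|n] Hn /=; first by rewrite subrr.
    rewrite HNd; last by apply: leq_trans Hn; rewrite leq_maxl.
    rewrite ltnNge -ltnS (leq_trans (leq_maxr Nd N.+1) Hn) /= subr0 //.
  by apply: functional_extensionality => n; rewrite /free_add addrC subrK.
- move=> t _.
  pose f := fun n : nat => if n is 0%N then t else 0.
  have Ff : F f by exists 1%N => -[|n].
  case: (Dsum f Ff) => g [d [[a [b [[Fa [N [_ Ea]]] [[_ Eb] ->]]] [Dd Hf]]]].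
  exists (a 0%N), (d 0%N); split.
    by exists N, (fun i => a i.+1).
  split; first by exists d.
  by have := congr1 (fun h => h 0%N) Hf; rewrite /free_add /= Eb addr0.
Qed.

Lemma transfer (I S : R -> Prop) : (forall t, I t <-> S t) ->
  direct_summand 0 +%R *%R (fun _ => True) S -> direct_summand 0 +%R *%R (fun _ => True) I.
Proof.
move=> E [[_ [S0 [SD SM]]] [K [HK [Kd Ks]]]]; split.
  split; [by []|split; [|split]].
  - by apply/E.
  - by move=> a b /E Ha /E Hb; apply/E; apply: SD.
  - by move=> a r /E Ha; apply/E; apply: SM.
exists K; split => //; split.
  by move=> t /E; apply: Kd.
move=> t _; case: (Ks t Logic.I) => a [b [Ha [Hb ->]]]; exists a, b; split => //.
by apply/E.
Qed.

Fixpoint Pseq (h : (nat -> R) -> nat -> R) (n : nat) : nat -> R :=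
  match n with
  | 0%N => fun _ => 0
  | m.+1 => fun i => if i == m then h (Pseq h m) m else Pseq h m i
  end.

Lemma bwd : free_SSP R -> semisimple_ring R.
Proof.
move=> hS I HI; apply: NNPP => hn.
case: (HI) => [_ [I0 [ID IM]]].
pose tr n (s : nat -> R) i := if (i < n)%N then s i else 0.
have Hsp : forall x, (forall i, I (x i)) -> forall t, span x t -> I t.
  move=> x Hx t [N [r ->]]; elim: N => [|N IH]; first by rewrite big_ord0.
  by rewrite big_ord_recr /=; apply: ID => //; apply: IM.
have Hex : forall s n, exists y, (forall i, I (tr n s i)) -> I y /\ ~ span (tr n s) y.
  move=> s n; case: (classic (forall i, I (tr n s i))) => H; last by exists 0.
  apply: NNPP => hne; apply: hn.
  apply: (@transfer _ (span (tr n s))); last exact: span_summand.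
  move=> t; split; last exact: Hsp.
  move=> It; apply: NNPP => Hns; apply: hne; exists t => _; split => //.
pose h s n := proj1_sig (constructive_indefinite_description _ (Hex s n)).
have Hh : forall s n, (forall i, I (tr n s i)) -> I (h s n) /\ ~ span (tr n s) (h s n).
  by move=> s n; rewrite /h; case: constructive_indefinite_description.
pose P := Pseq h.
pose x i := P i.+1 i.
have HPx : forall n i, (i < n)%N -> P n i = x i.
  elim=> [//|n IH] i Hi; rewrite /x /P /=.
  case: (i =P n) => [->|Hne]; first by rewrite /= eqxx.
  have Hin : (i < n)%N by rewrite ltn_neqAle (introN eqP Hne) -ltnS Hi.
  by have := IH i Hin; rewrite /P /x /P /= => ->.
have HPI : forall n i, (i < n)%N -> I (P n i).
  elim=> [//|n IH] i Hi; rewrite /P /=.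
  case: (i =P n) => [Ein|Hne].
    idtac.
    have Hc : forall j, I (tr n (Pseq h n) j) by move=> j; rewrite /tr; case: ifP => // Hj; exact: IH.
    exact: (proj1 (Hh _ _ Hc)).
  apply: IH; by rewrite ltn_neqAle (introN eqP Hne) -ltnS Hi.
have Hx : forall i, I (x i) by move=> i; apply: HPI.
case: (span_summand x hS) => [[_ [_ [SD SM]]] [K [[_ [_ [KD KM]]] [Kdis Ksum]]]].
case: (Ksum 1 Logic.I) => e [k [[M [r He]] [Kk Hek]]].
pose y := x M.
have Ey : y = e * y + k * y by rewrite -mulrDl -Hek mul1r.
have Hky : k * y = 0.
  apply: Kdis; last exact: KM.
  have -> : k * y = y + (e * y) * (-1) by rewrite mulrN1 {2}Ey addrC addKr.
  apply: SD; first exact: span_in.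
  apply: (SM); apply: (SM); by exists M, r.
have Hy : y = \sum_(i < M) tr M (P M) i * (r i * y).
  rewrite {1}Ey Hky addr0 He mulr_suml; apply: eq_bigr => i _.
  by rewrite /tr ltn_ord HPx // mulrA.
have Hyh : y = h (P M) M by rewrite /y /x /P /= eqxx.
have Hc : forall i, I (tr M (P M) i).
  by move=> i; rewrite /tr; case: ifP => // Hi; apply: HPI.
case: (Hh _ _ Hc) => _; apply; rewrite -Hyh.
by exists M, (fun i => r i * y).
Qed.
End Aux.

Theorem corollary2p18 (R : pzRingType) : semisimple_ring R <-> free_SSP R.
Proof.
split; last exact: bwd.
move=> hss A B HA HB; apply: fwd => //.
by apply: sum_submod; [case: HA | case: HB].
Qed.
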